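(* Let $\mathbf{x}_1,\dots,\mathbf{x}_n$ be examples, let $f$ be a feature map sending each example to a vector in $\mathbb{R}^d$, and let $W^I=(\mathbf{w}^I_1,\dots,\mathbf{w}^I_n)\in\mathbb{R}^{d\times n}$. Each example $\mathbf{x}_i$ has instance label $y_i^I=i$ and a target label $y_i^F\in\{1,\dots,F\}$, where every target class contains exactly $z$ examples, so that $zF=n$. Define \[\Pr\{y_i^I\mid f(\mathbf{x}_i),W^I\}=\frac{\exp(f(\mathbf{x}_i)^\top\mathbf{w}^I_{y_i^I})}{\sum_{j=1}^n\exp(f(\mathbf{x}_i)^\top\mathbf{w}^I_j)},\qquad \Pr\{y_i^F\mid f(\mathbf{x}_i),W^I\}=\frac{\exp(f(\mathbf{x}_i)^\top\bar{\mathbf{w}}^I_{y_i^F})}{\sum_{s=1}^F\exp(f(\mathbf{x}_i)^\top\bar{\mathbf{w}}^I_s)},\] where $\bar{\mathbf{w}}^I_s=\frac1z\sum_{j:\,y_j^F=s}\mathbf{w}^I_j$. If $\Pr\{y_i^I\mid f(\mathbf{x}_i),W^I\}\ge\alpha$ for all $i$, then for all $i$, \[\Pr\{y_i^F\mid f(\mathbf{x}_i),W^I\}\ge z\alpha\exp\big(f(\mathbf{x}_i)^\top(\bar{\mathbf{w}}^I_{y_i^F}-\mathbf{w}^I_{y_i^I})\big).\]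
   Context: This setting models instance classification: each of the $n$ examples is treated as its own class, $f$ is the feature extractor (the convolutional layers of a network) and $W^I$ is the weight matrix of the final fully-connected layer, with no bias term. The target-class probability is computed with the class proxy $\bar{\mathbf{w}}^I_s$, the mean of the instance weight vectors belonging to target class $s$. *)

(* Defs.v *)
From HB Require Import structures.
From mathcomp Require Import all_boot all_order all_algebra.
From mathcomp Require Import reals.
From mathcomp Require Import sequences exp.
Set Implicit Arguments. Unset Strict Implicit. Unset Printing Implicit Defensive.
Import Order.TTheory GRing.Theory Num.Theory.
Local Open Scope ring_scope.

Definition dotv (R : realType) (d : nat) (u v : 'cV[R]_d) : R :=
  \sum_(k < d) u k 0 * v k 0.

Definition wbar (R : realType) (d n F : nat) (z : nat)
  (W : 'M[R]_(d, n)) (yF : 'I_n -> 'I_F) (s : 'I_F) : 'cV[R]_d :=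
  (z%:R)^-1 *: \sum_(j < n | yF j == s) col j W.

(* Pr{ y_i^I | f(x_i), W^I } with y_i^I = i *)
Definition prob_inst (R : realType) (d n : nat) (W : 'M[R]_(d, n))
  (fx : 'cV[R]_d) (i : 'I_n) : R :=
  expR (dotv fx (col i W)) / \sum_(j < n) expR (dotv fx (col j W)).

Definition prob_target (R : realType) (d n F z : nat) (W : 'M[R]_(d, n))
  (yF : 'I_n -> 'I_F) (fx : 'cV[R]_d) (s : 'I_F) : R :=
  expR (dotv fx (wbar z W yF s)) /
    \sum_(t < F) expR (dotv fx (wbar z W yF t)).

(* Main.v *)
Require Import Defs.
From HB Require Import structures.
From mathcomp Require Import all_boot all_order all_algebra.
From mathcomp Require Import reals.
From mathcomp Require Import sequences exp.
Import Order.TTheory GRing.Theory Num.Theory.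
Local Open Scope ring_scope.

Lemma dotvD (R : realType) d (u v w : 'cV[R]_d) : dotv u (v + w) = dotv u v + dotv u w.
Proof. by rewrite /dotv -big_split /=; apply: eq_bigr => k _; rewrite mxE mulrDr. Qed.

Lemma dotvZ (R : realType) d (u v : 'cV[R]_d) c : dotv u (c *: v) = c * dotv u v.
Proof. by rewrite /dotv mulr_sumr; apply: eq_bigr => k _; rewrite mxE mulrCA. Qed.

Lemma dotvN (R : realType) d (u v : 'cV[R]_d) : dotv u (- v) = - dotv u v.
Proof. by rewrite -scaleN1r dotvZ mulN1r. Qed.

Lemma dotv_sum (R : realType) d n (u : 'cV[R]_d) (P : pred 'I_n) (v : 'I_n -> 'cV[R]_d) :
  dotv u (\sum_(j < n | P j) v j) = \sum_(j < n | P j) dotv u (v j).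
Proof.
elim/big_rec2: _ => [|j y1 y2 _ <-]; last by rewrite dotvD.
by rewrite /dotv big1 // => k _; rewrite mxE mulr0.
Qed.

Lemma jensen (R : realType) n (P : pred 'I_n) (a : 'I_n -> R) (z : nat) :
  (0 < z)%N -> #|[set j | P j]| = z ->
  z%:R * expR ((z%:R)^-1 * \sum_(j < n | P j) a j) <= \sum_(j < n | P j) expR (a j).
Proof.
move=> z0 hz.
set m := (z%:R)^-1 * _.
have hm : \sum_(j < n | P j) (a j - m) = 0.
  rewrite sumrB sumr_const.
  have -> : #|[pred j | P j]| = z by rewrite -hz cardsE.
  rewrite /m -[_ *+ z]mulr_natl mulrA mulfV ?mul1r ?subrr //.
  by rewrite pnatr_eq0 -lt0n.
have : \sum_(j < n | P j) (expR m * (1 + (a j - m))) <= \sum_(j < n | P j) expR (a j).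
  apply: ler_sum => j _.
  have -> : expR (a j) = expR m * expR (a j - m) by rewrite -expRD addrC subrK.
  by rewrite ler_pM2l ?expR_gt0 // expR_ge1Dx.
rewrite -mulr_sumr big_split /= hm addr0 sumr_const.
have -> : #|[pred j | P j]| = z by rewrite -hz cardsE.
by rewrite mulrC mulr_natl.
Qed.

Theorem lemma1 (R : realType) (X : Type) (d n F z : nat)
  (x : 'I_n -> X) (f : X -> 'cV[R]_d) (W : 'M[R]_(d, n))
  (yF : 'I_n -> 'I_F)
  (hclass : forall s : 'I_F, #|[set j : 'I_n | yF j == s]| = z)
  (alpha : R)
  (hinst : forall i : 'I_n, alpha <= prob_inst W (f (x i)) i) :
  forall i : 'I_n,
    z%:R * alpha * expR (dotv (f (x i)) (wbar z W yF (yF i) - col i W))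
      <= prob_target z W yF (f (x i)) (yF i).
Proof.
move=> i.
set fx := f (x i).
set a := fun j => dotv fx (col j W).
set b := fun t => dotv fx (wbar z W yF t).
have hb : forall t, b t = (z%:R)^-1 * \sum_(j < n | yF j == t) a j.
  by move=> t; rewrite /b /wbar dotvZ dotv_sum.
have z0 : (0 < z)%N.
  rewrite -(hclass (yF i)) card_gt0; apply/set0Pn; exists i; by rewrite inE.
set SF := \sum_(t < F) expR (b t).
set Sn := \sum_(j < n) expR (a j).
have SFpos : 0 < SF.
  rewrite /SF (bigD1 (yF i)) //= ltr_pwDl ?expR_gt0 // sumr_ge0 // => t _.
  exact/ltW/expR_gt0.
have Snpos : 0 < Sn.
  rewrite /Sn (bigD1 i) //= ltr_pwDl ?expR_gt0 // sumr_ge0 // => t _.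
  exact/ltW/expR_gt0.
have key : z%:R * SF <= Sn.
  rewrite /Sn (partition_big yF xpredT) //= /SF mulr_sumr.
  apply: ler_sum => t _; rewrite hb.
  apply: jensen => //; rewrite -(hclass t); apply: eq_card => j; by rewrite !inE.
have -> : prob_target z W yF fx (yF i) = expR (b (yF i)) / SF by [].
rewrite dotvD dotvN -/(b (yF i)) -/(a i) expRB.
have := hinst i; rewrite -/fx /prob_inst -/(a i) -/Sn => ha.
case: (lerP alpha 0) => hal.
  apply: le_trans (_ : 0 <= _); last by rewrite divr_ge0 ?expR_ge0 // ltW.
  rewrite mulr_le0_ge0 ?divr_ge0 ?expR_ge0 //.
  by rewrite mulr_ge0_le0.
rewrite ler_pdivlMr // [X in X <= _]mulrC !mulrA.
have h1 : SF * z%:R * alpha / expR (a i) <= 1.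
  rewrite ler_pdivrMr ?expR_gt0 // mul1r.
  rewrite ler_pdivlMr // in ha.
  apply: le_trans ha; rewrite [alpha * _]mulrC ler_pM2r // mulrC; exact: key.
rewrite [X in X <= _]mulrAC.
by rewrite -[X in _ <= X]mul1r ler_pM2r ?expR_gt0.
Qed.
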